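(* Let $p$ be a prime and $e \ge 1$. Then $A_{p^e}$ is the $p \times p$ block matrix (each block of size $p^{e-1}\times p^{e-1}$) \[A_{p^e} = \begin{pmatrix} A_{p^{e-1}} & A_{p^{e-1}} & \cdots & A_{p^{e-1}} & A_{p^{e-1}} \\ I_{p^{e-1}} & 0 & \cdots & 0 & -I_{p^{e-1}} \\ 0 & I_{p^{e-1}} & \cdots & 0 & -I_{p^{e-1}} \\ \vdots & & \ddots & & \vdots \\ 0 & 0 & \cdots & I_{p^{e-1}} & -I_{p^{e-1}} \end{pmatrix},\] with $A_1 = (1)$.
   Context: For a positive integer $k$, let $\Phi_d$ denote the $d$th cyclotomic polynomial and let $\Psi_k : \mathbf{Z}[X]/(X^k-1) \to \bigoplus_{d \mid k} \mathbf{Z}[X]/(\Phi_d(X))$ be the natural map $f \bmod (X^k-1) \mapsto \bigoplus_{d\mid k} f \bmod \Phi_d(X)$. Endow $\mathbf{Z}[X]/(X^k-1)$ with the basis $(1, \overline{X}, \dots, \overline{X}^{k-1})$, each $\mathbf{Z}[X]/(\Phi_d(X))$ with the basis $(1, \overline{X}, \dots, \overline{X}^{\phi(d)-1})$, and order the summands of the direct sum by increasing $d$. $A_k$ is the $k\times k$ integer matrix of $\Psi_k$ with respect to these bases (the $j$th column is the coordinate vector of $\Psi_k(\overline{X}^{j})$). $I_r$ is the $r\times r$ identity matrix. *)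

(* Defs.v *)
From HB Require Import structures.
From mathcomp Require Import all_boot all_order all_algebra all_field.
Set Implicit Arguments. Unset Strict Implicit. Unset Printing Implicit Defensive.
Import GRing.Theory.
Local Open Scope ring_scope.

(* Coordinate vector (as a list of integers, concatenated over d | k in
   increasing order) of Psi_k(X^j) = (X^j mod Phi_d)_{d | k}, each component
   written in the basis 1, X, ..., X^(phi(d)-1). *)
Definition Psi_coords (k j : nat) : seq int :=
  flatten [seq [seq (('X^j %% 'Phi_d) : {poly int})`_i | i <- iota 0 (totient d)]
          | d <- divisors k].

Definition A (k : nat) : 'M[int]_k :=
  \matrix_(r < k, j < k) nth 0 (Psi_coords k j) r.

(* Main.v *)
Require Import Defs.
From HB Require Import structures.
From mathcomp Require Import all_boot all_order all_algebra all_field.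
From mathcomp Require Import ring zify.
From Stdlib Require Import Lia.
Import GRing.Theory.
Local Open Scope ring_scope.

Lemma dvdn_ppow p e d : prime p ->
  (d %| p ^ e.+1)%N = (d %| p ^ e)%N || (d == p ^ e.+1)%N.
Proof.
move=> pp; apply/idP/idP.
  case/(dvdn_pfactor _ _ pp) => k; rewrite leq_eqVlt => /orP[/eqP->|]; first by move=> ->; rewrite eqxx orbT.
  by rewrite ltnS => ke ->; rewrite dvdn_exp2l.
case/orP=> [H|/eqP->//]; apply: dvdn_trans H _; by rewrite dvdn_exp2l.
Qed.

Lemma divisors_pow p e : prime p ->
  divisors (p ^ e.+1) = divisors (p ^ e) ++ [:: p ^ e.+1]%N.
Proof.
move=> pp; have p0 := prime_gt0 pp.
apply: (irr_sorted_eq ltn_trans ltnn); first exact: sorted_divisors_ltn.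
  rewrite (sorted_pairwise ltn_trans) pairwise_cat -(sorted_pairwise ltn_trans) sorted_divisors_ltn /= andbT.
  apply/allrelP => x y; rewrite inE => xd /eqP ->.
  rewrite -dvdn_divisors ?expn_gt0 ?p0 // in xd.
  apply: leq_ltn_trans (dvdn_leq _ xd) _; first by rewrite expn_gt0 p0.
  by rewrite ltn_exp2l // prime_gt1.
move=> d; rewrite mem_cat inE -!dvdn_divisors ?expn_gt0 ?p0 //; exact: dvdn_ppow.
Qed.

Definition coords (k j : nat) : seq int :=
  [seq (('X^j %% 'Phi_k) : {poly int})`_i | i <- iota 0 (totient k)].

Lemma Psi_pow p e j : prime p ->
  Psi_coords (p ^ e.+1) j = Psi_coords (p ^ e) j ++ coords (p ^ e.+1) j.
Proof. by move=> pp; rewrite /Psi_coords divisors_pow // map_cat flatten_cat /= cats0. Qed.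

Lemma size_Psi p e j : prime p -> size (Psi_coords (p ^ e) j) = (p ^ e)%N.
Proof.
move=> pp; elim: e => [|e IH]; first by rewrite expn0 /Psi_coords; have -> : divisors 1 = [:: 1%N] by []; rewrite /= ?cats0 ?size_map ?size_iota /=.

rewrite Psi_pow // size_cat IH size_map size_iota totient_pfactor //=.
rewrite expnS; case: (p) (prime_gt0 pp) => // q _; by rewrite mulSn.
Qed.

Lemma modp_addmul (d u v : {poly int}) : d \is monic -> (u + v * d) %% d = u %% d.
Proof.
move=> md; have ud : lead_coef d \in GRing.unit by rewrite (monicP md) unitr1.
symmetry; apply: (Pdiv.IdomainUnit.modpP ud (q := u %/ d + v)).
  by rewrite {1}(Pdiv.IdomainUnit.divp_eq ud u) mulrDl addrAC.
by rewrite ltn_modp monic_neq0.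
Qed.

Lemma Phi_cong k m c d : (k %| m)%N -> (0 < m)%N ->
  ('X^(c * m + d) : {poly int}) %% 'Phi_k = 'X^d %% 'Phi_k.
Proof.
move=> km m0.
have [q Hq]: exists q, 'X^m - 1 = q * 'Phi_k.
  rewrite -prod_Cyclotomic // (big_rem k) /=; last by rewrite -dvdn_divisors.
  by eexists; apply: mulrC.
have Xm : 'X^m = 1 + q * 'Phi_k by rewrite -Hq; ring.
have [t Ht]: exists t, ('X^m)^+c = 1 + t * 'Phi_k.
  elim: c => [|c [t Ht]]; first by exists 0; rewrite expr0 mul0r addr0.
  exists (q + t + q * t * 'Phi_k); rewrite exprS Ht Xm; ring.
rewrite exprD mulnC exprM Ht mulrDl mul1r -mulrA [_ * 'X^d]mulrC mulrA.
by rewrite modp_addmul // Cyclotomic_monic.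
Qed.

Lemma geom (m q : nat) :
  ('X^m - 1) * \sum_(k < q) ('X^(k * m) : {poly int}) = 'X^(q * m) - 1.
Proof.
elim: q => [|q IH]; first by rewrite big_ord0 mulr0 mul0n expr0 subrr.
rewrite big_ord_recr /= mulrDr IH mulSn exprD; ring.
Qed.

Lemma Phi_pow p e : prime p ->
  'Phi_(p ^ e.+1) = \sum_(k < p) ('X^(k * p ^ e) : {poly int}).
Proof.
move=> pp; have p0 := prime_gt0 pp; have m0 : (0 < p ^ e)%N by rewrite expn_gt0 p0.
have nz : ('X^(p ^ e) - 1 : {poly int}) != 0.
  by rewrite monic_neq0 // monicXnsubC.
apply: (mulfI nz); rewrite geom -expnS.
have n0 : (0 < p ^ e.+1)%N by rewrite expn_gt0 p0.
by rewrite -[RHS](prod_Cyclotomic n0) divisors_pow // big_cat big_seq1 prod_Cyclotomic.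
Qed.

Lemma eq_divmod x y b d m : (b < m)%N -> (d < m)%N ->
  (x * m + b == y * m + d)%N = (x == y) && (b == d).
Proof.
move=> bm dm; apply/eqP/andP => [H|[/eqP-> /eqP->]//].
have m0 : (0 < m)%N by apply: leq_ltn_trans bm.
split; apply/eqP.
  by have := congr1 (divn^~ m) H; rewrite /= !divnMDl // !divn_small // !addn0.
by have := congr1 (modn^~ m) H; rewrite /= !modnMDl !modn_small.
Qed.

Lemma top_coef p e (a c b d : nat) : prime p -> (a < p.-1)%N -> (c < p)%N ->
  (b < p ^ e)%N -> (d < p ^ e)%N ->
  (('X^(c * p ^ e + d) %% 'Phi_(p ^ e.+1)) : {poly int})`_(a * p ^ e + b)
  = ((c == a) && (b == d))%:R - ((c == p.-1) && (b == d))%:R.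
Proof.
move=> pp ap cp bm dm.
have sz : size ('Phi_(p ^ e.+1) : {poly int}) = (p.-1 * p ^ e).+1.
  by rewrite size_Cyclotomic totient_pfactor.
have PP := @Phi_pow p e pp.
move: PP sz ap cp bm dm; case: p pp => // p' pp /= PP sz ap cp; set m := (p'.+1 ^ e)%N => bm dm.
have m0 : (0 < m)%N by apply: leq_ltn_trans bm.
have [cp'|pc] := ltnP c p'.
  rewrite modp_small; last by rewrite sz size_polyXn ltnS /m; nia.
  rewrite coefXn eq_divmod // (ltn_eqF cp') subr0 eq_sym.
  by case: (a == c).
have ce : c = p' by apply/eqP; rewrite eqn_leq pc -ltnS cp.
pose Tm := \sum_(k < p') ('X^(k * m + d) : {poly int}).
have cTm i : Tm`_i = \sum_(k < p') (i == k * m + d)%N%:R.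
  by rewrite /Tm coef_sum; apply: eq_bigr => k _; rewrite coefXn.
have XE : ('X^(c * m + d) : {poly int}) = - Tm + 'X^d * 'Phi_(p'.+1 ^ e.+1).
  rewrite PP big_ord_recr /= mulrDr ce /Tm mulr_sumr exprD mulrC -exprD addnC.
  have -> : \sum_(i < p') ('X^d * 'X^(i * p'.+1 ^ e) : {poly int}) = \sum_(k < p') 'X^(k * m + d).
    by apply: eq_bigr => k _; rewrite -exprD addnC.
  by rewrite addrA addNr add0r.
rewrite XE modp_addmul ?Cyclotomic_monic // modp_small; last first.
  rewrite size_polyN sz ltnS; apply/leq_sizeP => i hi.
  rewrite cTm big1 // => k _; case: eqP => // Hi; exfalso.
  have := ltn_ord k; nia.
rewrite coefN cTm ce eqxx /= (gtn_eqF ap).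
case: (eqVneq b d) => [<-|bd] /=; last first.
  rewrite big1 ?oppr0 ?subr0 // => k _; by rewrite eq_divmod // (negbTE bd) andbF.
rewrite (bigD1 (Ordinal ap)) //= eqxx.
rewrite big1 ?addr0 ?sub0r // => k kn; rewrite eq_divmod // eqxx andbT.
case: eqP => // Ha; case/eqP: kn; exact: val_inj.
Qed.

Theorem lemma2p5 :
  A 1 = 1%:M /\
  forall (p e : nat), prime p -> (0 < e)%N ->
  forall (r j : 'I_(p ^ e)) (a c : 'I_p) (b d : 'I_(p ^ e.-1)),
    val r = (a * p ^ e.-1 + b)%N -> val j = (c * p ^ e.-1 + d)%N ->
    A (p ^ e) r j =
      (if a == 0 :> nat then A (p ^ e.-1) b d
       else (((c == a.-1 :> nat) && (b == d))%:R
             - ((c == p.-1 :> nat) && (b == d))%:R)).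
Proof.
split.
  apply/matrixP => i k; rewrite !ord1 /A !mxE /Psi_coords.
  have -> : divisors 1 = [:: 1%N] by [].
  rewrite /= expr0 modp_small ?coef1 // size_Cyclotomic size_polyC.
  by [].
move=> p e pp e0 r j a c b d hr hj.
case: e e0 r j b d hr hj => // e _ r j b d hr hj /=.
have p0 := prime_gt0 pp; have m0 : (0 < p ^ e)%N by rewrite expn_gt0 p0.
rewrite /A !mxE Psi_pow // nth_cat size_Psi // hr.
case: (posnP a) => [a0|ap].
  rewrite a0 mul0n add0n ltn_ord ?eqxx /=.
  congr (nth _ _ _); rewrite /Psi_coords hj; congr flatten.
  apply/eq_in_map => k /=; rewrite -dvdn_divisors // => km.
  by rewrite Phi_cong.
have -> : (a * p ^ e + b < p ^ e)%N = false.
  by apply/negbTE; rewrite -leqNgt; apply: leq_trans (leq_addr _ _); rewrite leq_pmull.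
rewrite ?(gtn_eqF ap) /=.
have -> : (a * p ^ e + b - p ^ e = a.-1 * p ^ e + b)%N.
  by rewrite -{1}(prednK ap) mulSn -addnA addKn.
have ap1 : (a.-1 < p.-1)%N by rewrite -ltnS prednK // prednK // ltn_ord.
rewrite /coords (nth_map 0); last first.
  rewrite size_iota totient_pfactor //=.
  have := ltn_ord b; move: ap1; rewrite /=; set x := a.-1; set y := p.-1; set m := (p ^ e)%N; nia.
rewrite nth_iota ?add0n; last first.
  rewrite totient_pfactor //=.
  have := ltn_ord b; move: ap1; rewrite /=; set x := a.-1; set y := p.-1; set m := (p ^ e)%N; nia.
rewrite hj top_coef //; exact: ltn_ord.
Qed.
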